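(* Let $n\ge 1$, let $X=\{x_1,\dots,x_n\}$ and $Z=\{z_1,\dots,z_n\}$ be sets of $n$ points equipped with symmetric non-negative functions $d_X\colon X\times X\to\mathbb{R}^+$ and $d_Z\colon Z\times Z\to\mathbb{R}^+$, and let $f_\bullet\colon X\to Z$ be the bijection $f_\bullet(x_i)=z_i$. Fix $\varepsilon>0$ and suppose that $|d_X(x,y)-d_Z(f_\bullet(x),f_\bullet(y))|<\varepsilon$ for all $x,y\in X$. Then, for every positive integer $q$, \[ d^q_{f_0}(B(X),B(Z))\le (n-1)^{1/q}\cdot\varepsilon . \]
   Context: $\mathbb{R}^+=[0,\infty)$. For a finite set $Y=\{y_1,\dots,y_n\}$ with a symmetric non-negative function $d_Y\colon Y\times Y\to\mathbb{R}^+$ (distinct points may have value $0$, and the triangle inequality need not hold): the Vietoris–Rips graph $\mathrm{VR}_0(Y)$ has vertex set $Y$ and no edges, and for $r>0$, $\mathrm{VR}_r(Y)$ has vertex set $Y$ and an edge $[y,y']$ ($y\neq y'$) whenever $d_Y(y,y')\le r$. Let $G_r(Y)$, for $r\ge 0$, denote the graph on $Y$ with an edge $[y,y']$ ($y\ne y'$) whenever $d_Y(y,y')\le r$. $H_0(\mathrm{VR}_r(Y))$ is the $\mathbb{Z}_2$-vector space freely generated by the connected components of $\mathrm{VR}_r(Y)$; $[y]$ denotes the class of $y$. For $b\ge 0$ let $\ker^+_b(Y)\subseteq H_0(\mathrm{VR}_0(Y))$ be the span of all $[y]+[y']$ with $y,y'$ in the same connected component of $G_b(Y)$; let $\ker^-_0(Y)=0$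 and, for $b>0$, $\ker^-_b(Y)$ be the span of all $[y]+[y']$ with $y,y'$ in the same connected component of $G_r(Y)$ for some $0\le r<b$. For $j\in\{2,\dots,n\}$, the death value $b_j$ of $y_j$ is the least $r\ge 0$ such that $y_j$ lies in the same connected component of $G_r(Y)$ as some $y_i$ with $i<j$ ($y_1$ never dies). For $a\ge 0$, $m^Y(a)$ is the number of $j\in\{2,\dots,n\}$ with $b_j=a$; the barcode $B(Y)$ is the multiset of death values with these multiplicities. Given $X,Z,f_\bullet$ as in the claim, $f_0\colon H_0(\mathrm{VR}_0(X))\to H_0(\mathrm{VR}_0(Z))$ is the linear isomorphism $[x_i]\mapsto[z_i]$, and the induced block function is, for $a,b\in\mathbb{R}^+$, \[ \mathcal{M}^0_f(a,b)=\dim\frac{f_0(\ker^+_a(X))\cap\ker^+_b(Z)}{f_0(\ker^-_a(X))\cap\ker^+_b(Z)+f_0(\ker^+_a(X))\cap\ker^-_b(Z)}. \] The induced matching distance is $d^q_{f_0}(B(X),B(Z))=\big(\sum_{a,b\in\mathbb{R}^+}\mathcal{M}^0_f(a,b)\,|a-b|^q\big)^{1/q}$ (only finitely many terms are nonzero). *)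

(* Defs.v *)
From HB Require Import structures.
From mathcomp Require Import all_boot all_order all_algebra.
From mathcomp Require Import mathcomp_extra boolp classical_sets fsbigop reals exp.
Set Implicit Arguments. Unset Strict Implicit. Unset Printing Implicit Defensive.
Import Order.TTheory GRing.Theory Num.Theory.
Local Open Scope ring_scope.

Definition Gedge (R : realType) n (d : 'I_n -> 'I_n -> R) (r : R) : rel 'I_n :=
  fun i j => (i != j) && (d i j <= r).

Definition same_comp (R : realType) n (d : 'I_n -> 'I_n -> R) (r : R) (i j : 'I_n) :=
  connect (Gedge d r) i j.

(* H_0(VR_0(Y)) over Z_2: the F_2-vector space freely generated by the
   points, realized as row vectors; [y_i] = cls i. *)
Definition H0 n := 'rV['F_2]_n.
Definition cls n (i : 'I_n) : H0 n := delta_mx 0 i.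

Definition kerp (R : realType) n (d : 'I_n -> 'I_n -> R) (b : R) : {vspace H0 n} :=
  <<[seq (cls p.1 + cls p.2)%R | p <- enum [pred p : 'I_n * 'I_n | same_comp d b p.1 p.2]]>>%VS.

Definition kerm (R : realType) n (d : 'I_n -> 'I_n -> R) (b : R) : {vspace H0 n} :=
  if b == 0 then 0%VS else
  <<[seq (cls p.1 + cls p.2)%R | p <- enum [pred p : 'I_n * 'I_n |
       `[< exists r : R, (0 <= r)%R /\ (r < b)%R /\ same_comp d r p.1 p.2 >] ]]>>%VS.

(* f_0 : [x_i] |-> [z_i]; in the common basis representation H0 n it is the identity. *)
Definition f0 n : 'End(H0 n) := \1%VF.

(* induced block function M^0_f(a,b): dimension of N / D where
   D = f0(ker^-_a X) /\ ker^+_b Z + f0(ker^+_a X) /\ ker^-_b Z is a subspace of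
   N = f0(ker^+_a X) /\ ker^+_b Z, so dim(N/D) = dim N - dim D. *)
Definition Mf (R : realType) n (dX dZ : 'I_n -> 'I_n -> R) (a b : R) : nat :=
  (\dim ((f0 n @: kerp dX a) :&: kerp dZ b)
   - \dim ((f0 n @: kerm dX a) :&: kerp dZ b + (f0 n @: kerp dX a) :&: kerm dZ b))%N.

Definition dmatch (R : realType) n (dX dZ : 'I_n -> 'I_n -> R) (q : nat) : R :=
  powR (\sum_(p \in [set p : R * R | 0 <= p.1 /\ 0 <= p.2])
          ((Mf dX dZ p.1 p.2)%:R * `|p.1 - p.2| ^+ q)) (q%:R^-1).

(* Main.v *)
Require Import Defs.
From HB Require Import structures.
From mathcomp Require Import all_boot all_order all_algebra.
From mathcomp Require Import mathcomp_extra boolp classical_sets fsbigop reals exp.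
From mathcomp Require Import cardinality zify lra.
Import Order.TTheory GRing.Theory Num.Theory.
Local Open Scope ring_scope.

Lemma tele_path (R : realType) (P : pred R) (F G : R -> nat) :
  {in P, forall x, (F x <= G x)%N} ->
  {in P &, forall x y, y < x -> (F x + G y <= G x)%N} ->
  forall t x, all P (x :: t) -> path (fun a b => b < a) x t ->
  (\sum_(y <- x :: t) F y <= G x)%N.
Proof.
move=> H1 H2; elim=> [|y t IH] x /=.
  by rewrite big_cons big_nil addn0 => /andP[Px _] _; exact: H1.
move=> /and3P[Px Py Pt] /andP[yx pt]; rewrite big_cons.
apply: leq_trans (H2 x y Px Py yx); rewrite leq_add2l.
by apply: IH => //=; rewrite Py.
Qed.

Lemma tele (R : realType) (s : seq R) (F G : R -> nat) (M : nat) :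
  uniq s ->
  {in s, forall x, (F x <= G x)%N} ->
  {in s &, forall x y, y < x -> (F x + G y <= G x)%N} ->
  {in s, forall x, (G x <= M)%N} ->
  (\sum_(x <- s) F x <= M)%N.
Proof.
move=> us H1 H2 H3.
have pt : perm_eq (rev (sort <=%O s)) s by rewrite perm_rev perm_sort.
have st : sorted (fun a b => b < a) (rev (sort <=%O s)).
  by rewrite rev_sorted sort_lt_sorted.
rewrite -(perm_big _ pt).
case E: (rev (sort <=%O s)) st => [|x t] /=; first by rewrite big_nil.
move=> pth.
have Ps : all (mem s) (x :: t).
  by apply/allP => y; rewrite -E (perm_mem pt).
have xs : x \in s by move/allP: Ps; apply; rewrite inE eqxx.
apply: leq_trans (H3 x xs).
exact: (@tele_path R (mem s)).
Qed.

Lemma sub_sum (T : eqType) (s t : seq T) (F : T -> nat) :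
  uniq s -> uniq t -> {subset s <= t} ->
  (\sum_(x <- s) F x <= \sum_(x <- t) F x)%N.
Proof.
move=> us ut st.
rewrite [X in (_ <= X)%N](bigID (mem s)) /=.
have -> : (\sum_(i <- t | i \in s) F i = \sum_(i <- s) F i)%N.
  rewrite -big_filter; apply: perm_big; apply: uniq_perm => //.
    exact: filter_uniq.
  by move=> x; rewrite mem_filter; apply/andP/idP => [[]|xs] //; split => //; apply: st.
exact: leq_addr.
Qed.

Lemma exists_delta (R : realType) (T : finType) (f : T -> R) (eps : R) :
  0 < eps -> (forall x, f x < eps) ->
  exists d, [/\ 0 <= d, d < eps & forall x, f x <= d].
Proof.
move=> e0 hf.
suff [d [d0 de hd]] : exists d, [/\ 0 <= d, d < eps & forall x, x \in enum T -> f x <= d].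
  by exists d; split => // x; apply: hd; rewrite mem_enum.
elim: (enum T) => [|y s [d [d0 de hd]]]; first by exists 0; split => //; exact: ltW.
exists (Num.max d (f y)); split.
- by rewrite le_max d0.
- by rewrite gt_max de hf.
- move=> x; rewrite inE => /orP[/eqP->|xs]; first by rewrite le_max lexx orbT.
  by rewrite le_max hd.
Qed.

Section V.
Variables (R : realType) (n : nat).
Implicit Types (d : 'I_n -> 'I_n -> R).

Lemma kerm_sub_kerp d b : (kerm d b <= kerp d b)%VS.
Proof.
rewrite /kerm; case: eqP => _; first exact: sub0v.
apply/span_subvP => v /mapP[[i j]]; rewrite mem_enum /= => /asboolP[r [r0 [rb hc]]] ->.
apply: memv_span; apply/mapP; exists (i, j) => //; rewrite mem_enum /=.
apply: (connect_sub _ hc) => u w /andP[uw duw]; apply: connect1.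
by rewrite /Gedge uw /=; exact: le_trans duw (ltW rb).
Qed.

Lemma kerp_sub_kerm d r b : 0 <= r -> r < b -> (kerp d r <= kerm d b)%VS.
Proof.
move=> r0 rb; rewrite /kerm gt_eqF; last exact: le_lt_trans rb.
apply/span_subvP => v /mapP[[i j]]; rewrite mem_enum /= => hc ->.
apply: memv_span; apply/mapP; exists (i, j) => //; rewrite mem_enum /=.
by apply/asboolP; exists r.
Qed.

Lemma kerp_dim d b : (1 <= n)%N -> (\dim (kerp d b) <= n.-1)%N.
Proof.
move=> hn.
pose c : 'cV['F_2]_n := const_mx 1.
pose L : 'Hom(H0 n, 'M['F_2]_(1,1)) := linfun (mulmxr c).
have sub : (kerp d b <= lker L)%VS.
  apply/span_subvP => v /mapP[[i j]] _ ->.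
  rewrite memv_ker lfunE /= mulmxDl /cls -!rowE !row_const.
  apply/eqP/matrixP => x y; rewrite !mxE; apply/eqP; by [].
have i0 : 'I_n by exists 0%N.
have nL : lker L != fullv.
  apply/negP => /eqP E.
  have : cls i0 \in lker L by rewrite E memvf.
  rewrite memv_ker lfunE /= /cls -rowE row_const.
  by move/eqP/matrixP => /(_ 0 0); rewrite !mxE; move/eqP; rewrite oner_eq0.
have [le1 eq1] := dimv_leqif_eq (subvf (lker L)).
have : (\dim (lker L) < n)%N.
  have h : \dim (fullv : {vspace H0 n}) = n by rewrite dimvf /dim /= mul1n.
  have := le1; rewrite h leq_eqVlt => /orP[/eqP E|//].
  by move: eq1; rewrite h E eqxx => /esym; rewrite (negbTE nL).
move=> h1; rewrite -ltnS prednK //; exact: leq_ltn_trans (dimvS sub) h1.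
Qed.

Lemma kerp_close (d1 d2 : 'I_n -> 'I_n -> R) (eps a b : R) :
  0 < eps -> (forall i j, `|d1 i j - d2 i j| < eps) -> 0 <= a -> a + eps <= b ->
  (kerp d1 a <= kerm d2 b)%VS.
Proof.
move=> e0 hc a0 ab.
have hf : forall p : 'I_n * 'I_n, d2 p.1 p.2 - d1 p.1 p.2 < eps.
  by move=> p; apply: le_lt_trans (ler_norm _) _; rewrite distrC; exact: hc.
have [dl [d0 de hd]] := @exists_delta R _ _ eps e0 hf.
apply: (@subv_trans _ _ (kerp d2 (a + dl))); last first.
  apply: kerp_sub_kerm; first exact: addr_ge0.
  by apply: lt_le_trans ab; rewrite ltrD2l.
apply/span_subvP => v /mapP[[i j]]; rewrite mem_enum /= => hcn ->.
apply: memv_span; apply/mapP; exists (i, j) => //; rewrite mem_enum /=.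
apply: (connect_sub _ hcn) => u w /andP[uw duw]; apply: connect1.
rewrite /Gedge uw /=; have := lerD (hd (u, w)) duw.
by rewrite /= subrK addrC.
Qed.

End V.

Section M.
Variables (R : realType) (n : nat) (dX dZ : 'I_n -> 'I_n -> R).

Definition Gf (a b : R) : nat :=
  (\dim (kerp dX a :&: kerp dZ b) - \dim (kerm dX a :&: kerp dZ b))%N.
Definition psi (a : R) : nat := (\dim (kerp dX a) - \dim (kerm dX a))%N.

Lemma MfE a b : Mf dX dZ a b =
  (\dim (kerp dX a :&: kerp dZ b)
   - \dim (kerm dX a :&: kerp dZ b + kerp dX a :&: kerm dZ b))%N.
Proof. by rewrite /Mf /f0 !lim1g. Qed.

Lemma Mf_le_G a b : (Mf dX dZ a b <= Gf a b)%N.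
Proof.
rewrite MfE /Gf; apply: leq_sub2l; apply: dimvS; exact: addvSl.
Qed.

Lemma Mf_step a b b' : 0 <= b' -> b' < b -> (Mf dX dZ a b + Gf a b' <= Gf a b)%N.
Proof.
move=> b0 bb; rewrite MfE /Gf.
set A := kerp dX a; set Am := kerm dX a; set B := kerp dZ b; set Bm := kerm dZ b.
set B' := kerp dZ b'.
have AmA : (Am <= A)%VS by exact: kerm_sub_kerp.
have B'Bm : (B' <= Bm)%VS by exact: kerp_sub_kerm.
have BmB : (Bm <= B)%VS by exact: kerm_sub_kerp.
have h1 := dimv_sum_cap (Am :&: B) (A :&: B').
have h2 : (\dim (Am :&: B + A :&: B') <= \dim (Am :&: B + A :&: Bm))%N.
  by apply: dimvS; apply: addvS => //; apply: capvS.
have h3 : (\dim (Am :&: B :&: (A :&: B')) <= \dim (Am :&: B'))%N.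
  apply: dimvS; rewrite subv_cap; apply/andP; split.
    exact: subv_trans (capvSl _ _) (capvSl _ _).
  exact: subv_trans (capvSr _ _) (capvSr _ _).
have h4 : (\dim (Am :&: B + A :&: Bm) <= \dim (A :&: B))%N.
  by apply: dimvS; rewrite subv_add; apply/andP; split; apply: capvS.
have h5 : (\dim (Am :&: B) <= \dim (A :&: B))%N by apply: dimvS; apply: capvS.
have h6 : (\dim (Am :&: B') <= \dim (A :&: B'))%N by apply: dimvS; apply: capvS.
lia.
Qed.

Lemma G_le_psi a b : (Gf a b <= psi a)%N.
Proof.
rewrite /Gf /psi.
set A := kerp dX a; set Am := kerm dX a; set B := kerp dZ b.
have AmA : (Am <= A)%VS by exact: kerm_sub_kerp.
have h1 := dimv_sum_cap (A :&: B) Am.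
have h2 : (\dim (A :&: B + Am) <= \dim A)%N.
  by apply: dimvS; rewrite subv_add AmA capvSl.
have h3 : (\dim (A :&: B :&: Am) <= \dim (Am :&: B))%N.
  apply: dimvS; rewrite subv_cap capvSr /=; exact: subv_trans (capvSl _ _) (capvSr _ _).
have h5 : (\dim (Am :&: B) <= \dim (A :&: B))%N by apply: dimvS; apply: capvS.
have h6 : (\dim Am <= \dim A)%N by apply: dimvS.
lia.
Qed.

Lemma psi_step a a' : 0 <= a' -> a' < a -> (psi a + \dim (kerp dX a') <= \dim (kerp dX a))%N.
Proof.
move=> a0 aa; rewrite /psi.
have h1 : (\dim (kerp dX a') <= \dim (kerm dX a))%N by apply/dimvS/kerp_sub_kerm.
have h2 : (\dim (kerm dX a) <= \dim (kerp dX a))%N by apply/dimvS/kerm_sub_kerp.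
lia.
Qed.

Lemma Mf_close (eps : R) a b : 0 < eps -> (forall i j, `|dX i j - dZ i j| < eps) ->
  0 <= a -> 0 <= b -> Mf dX dZ a b != 0%N -> `|a - b| < eps.
Proof.
move=> e0 hc a0 b0; apply: contraNT; rewrite -leNgt ler_normr => /orP[h|h].
  have sub : (kerp dZ b <= kerm dX a)%VS.
    apply: (@kerp_close _ _ _ _ eps) => //; first by move=> i j; rewrite distrC.
    lra.
  rewrite /Mf /f0 !lim1g subn_eq0; apply: dimvS; apply: subv_trans (addvSl _ _).
  by rewrite subv_cap capvSr andbT; exact: subv_trans (capvSr _ _) sub.
have sub : (kerp dX a <= kerm dZ b)%VS.
  apply: (@kerp_close _ _ _ _ eps) => //; lra.
rewrite MfE subn_eq0; apply: dimvS; apply: subv_trans (addvSr _ _).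
by rewrite subv_cap capvSl /=; exact: subv_trans (capvSl _ _) sub.
Qed.

End M.
Arguments psi {R n}.
Arguments Gf {R n}.

Lemma fs_mem (T : Type) (J : choiceType) (i : T) (P : set J) (F : J -> T) x :
  x \in finite_support i P F -> P x.
Proof.
case: (pselect (finite_set (P `&` F @^-1` [set~ i])%classic)) => [fin|inf].
  by rewrite in_finite_support // in_setE; case.
by rewrite no_finite_support.
Qed.

Lemma sum_Mf_le (R : realType) (n : nat) (dX dZ : 'I_n -> 'I_n -> R) (s : seq (R * R)) :
  (1 <= n)%N -> uniq s -> (forall p, p \in s -> 0 <= p.1 /\ 0 <= p.2) ->
  (\sum_(p <- s) Mf dX dZ p.1 p.2 <= n.-1)%N.
Proof.
move=> hn us hs.
set SA := undup [seq p.1 | p <- s]; set SB := undup [seq p.2 | p <- s].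
have hA : forall a, a \in SA -> 0 <= a.
  by move=> a; rewrite mem_undup => /mapP[p /hs [h _] ->].
have hB : forall b, b \in SB -> 0 <= b.
  by move=> b; rewrite mem_undup => /mapP[p /hs [_ h] ->].
have ut : uniq [seq (x, y) | x <- SA, y <- SB].
  apply: allpairs_uniq; rewrite ?undup_uniq //.
  by move=> [? ?] [? ?] _ _ /= [-> ->].
apply: leq_trans (@sub_sum _ s _ (fun p => Mf dX dZ p.1 p.2) us ut _) _.
  move=> [x y] ps; apply: allpairs_f; rewrite mem_undup; apply/mapP; by exists (x, y).
rewrite big_allpairs /=.
apply: (@leq_trans (\sum_(a <- SA) psi dX a)).
  rewrite [X in (X <= _)%N]big_seq [X in (_ <= X)%N]big_seq; apply: leq_sum => a aSA.
  apply: (@tele R SB (fun b => Mf dX dZ a b) (Gf dX dZ a)); rewrite ?undup_uniq //.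
  - by move=> x _; exact: Mf_le_G.
  - by move=> x y _ yB yx; apply: Mf_step => //; exact: hB.
  - by move=> x _; exact: G_le_psi.
apply: (@tele R SA (psi dX) (fun a => \dim (kerp dX a))); rewrite ?undup_uniq //.
- by move=> x _; exact: leq_subr.
- by move=> x y _ yA yx; apply: psi_step => //; exact: hA.
- by move=> x _; exact: kerp_dim.
Qed.

Theorem theorem1 (R : realType) (n : nat) (dX dZ : 'I_n -> 'I_n -> R) (eps : R)
  (hn : (1 <= n)%N)
  (hXsym : forall i j, dX i j = dX j i) (hXnn : forall i j, 0 <= dX i j)
  (hZsym : forall i j, dZ i j = dZ j i) (hZnn : forall i j, 0 <= dZ i j)
  (heps : 0 < eps)
  (hclose : forall i j, `|dX i j - dZ i j| < eps)
  (q : nat) (hq : (0 < q)%N) :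
  dmatch dX dZ q <= powR (n.-1)%:R (q%:R^-1) * eps.
Proof.
rewrite /dmatch.
set ss := finite_support _ _ _.
have memS : forall p, p \in ss -> 0 <= p.1 /\ 0 <= p.2.
  by move=> p pin; have := @fs_mem _ _ _ _ _ p pin.
have us : uniq ss by exact: finite_support_uniq.
have hsum : \sum_(p <- ss) (Mf dX dZ p.1 p.2)%:R * `|p.1 - p.2| ^+ q
            <= (n.-1)%:R * eps ^+ q.
  apply: (@le_trans _ _ (\sum_(p <- ss) (Mf dX dZ p.1 p.2)%:R * eps ^+ q)).
    rewrite big_seq [X in _ <= X]big_seq; apply: ler_sum => p ps.
    have [->|nz] := eqVneq (Mf dX dZ p.1 p.2) 0%N; first by rewrite !mul0r.
    apply: ler_wpM2l => //; apply: lerXn2r; rewrite ?nnegrE ?normr_ge0 ?ltW //.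
    by have [h1 h2] := memS p ps; apply: Mf_close heps hclose h1 h2 nz.
  rewrite -mulr_suml -natr_sum; apply: ler_wpM2r; first exact: exprn_ge0 (ltW heps).
  rewrite ler_nat.
  exact: sum_Mf_le.
have s0 : 0 <= \sum_(p <- ss) (Mf dX dZ p.1 p.2)%:R * `|p.1 - p.2| ^+ q.
  by apply: sumr_ge0 => p _; apply: mulr_ge0; rewrite ?ler0n ?exprn_ge0.
have q0 : 0 <= (q%:R : R)^-1 by rewrite invr_ge0 ler0n.
apply: le_trans (ge0_ler_powR q0 _ _ hsum) _.
- by rewrite nnegrE.
- by rewrite nnegrE mulr_ge0 ?ler0n ?exprn_ge0 ?ltW.
have e0 : 0 <= eps by exact: ltW.
have qn0 : (q%:R : R) != 0 by rewrite lt0r_neq0 // ltr0n.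
rewrite powRM ?ler0n ?exprn_ge0 // -(powR_mulrn _ e0) -powRrM mulfV //.
by rewrite powRr1.
Qed.
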